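(* Let $L_0$ be the boundary value problem on the tree $G$ (with $m$ edges and boundary conditions BC) with all potentials and all constants equal to zero, i.e. $\sigma_j\equiv 0$ and $\gamma_j=0$ for $j=1,\dots,m$, and let $\Delta_0(\lambda)$ be its characteristic function. Then $$\Delta_0(\lambda)=\rho^{1-d}\,R_m(\sin\rho\pi,\cos\rho\pi),$$ where $d$ is the number of Dirichlet conditions among BC and $R_m$ is a polynomial in two variables of degree $m$. Moreover, $$R_m(\sin\rho\pi,\cos\rho\pi)=\begin{cases}\sin\rho\pi\, Q_{m-1}(\cos\rho\pi), & d \text{ even},\\ Q_m(\cos\rho\pi), & d\text{ odd},\end{cases}$$ where $Q_k$ ($k=m-1$ or $k=m$) is a polynomial of degree $k$ satisfying $Q_k(z)=(-1)^kQ_k(-z)$.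
   Context: Let $G$ be a finite tree with vertex set $V$ and edges $e_1,\dots,e_m$ ($m\ge1$), all of length $\pi$. For $v\in V$ let $E_v$ be the set of edges incident to $v$. Vertices of degree $1$ are boundary vertices (set $\partial G$), the others are internal (set $\mathrm{int}\,G$). Each edge $e_j$ is parametrized by $x_j\in[0,\pi]$, the values $0$ and $\pi$ corresponding to its two endpoints. Let $\sigma_j\in L_2(0,\pi)$ be real-valued and $\gamma_j\in\mathbb R$, $j=1,\dots,m$. Put $y_j^{[1]}=y_j'-\sigma_jy_j$ (quasi-derivative) and $\ell_jy_j=-(y_j^{[1]})'-\sigma_jy_j^{[1]}-\sigma_j^2y_j$ on the domain $\{y_j\in W_2^1[0,\pi]: y_j^{[1]}\in W_1^1[0,\pi],\ \ell_jy_j\in L_2(0,\pi)\}$ (this realizes $-y_j''+q_jy_j$ with $q_j=\sigma_j'\in W_2^{-1}(0,\pi)$). If a vertex $u$ corresponds to $x_j=0$ put $y_j(u)=y_j(0)$, $y_j^{[1]}(u)=-y_j^{[1]}(0)$; if $v$ corresponds to $x_j=\pi$ put $y_j(v)=y_j(\pi)$, $y_j^{[1]}(v)=y_j^{[1]}(\pi)+\gamma_jy_j(\pi)$. The problem $L$: $\ell_jy_j=\lambda y_j$ on $(0,\pi)$, $j=1,\dots,m$, with, at each internal vertex $v$, $y_j(v)=y_k(v)$ for $e_j,e_k\in E_v$ and $\sum_{e_j\in E_v}y_j^{[1]}(v)=0$, and at each boundary vertex either the Dirichlet condition $y(v)=0$ or the Neumann condition $y^{[1]}(v)=0$ (a fixed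 choice, called BC). Let $C_j(x,\lambda),S_j(x,\lambda)$ solve $\ell_jy=\lambda y$ with $C_j(0)=S_j^{[1]}(0)=1$, $C_j^{[1]}(0)=S_j(0)=0$. The characteristic function $\Delta(\lambda)$ is defined recursively: (i) if $m=1$: for $y_1(0)=y_1(\pi)=0$, $\Delta=S_1(\pi,\lambda)$; for $y_1(0)=y_1^{[1]}(\pi)=0$, $\Delta=S_1^{[1]}(\pi,\lambda)+\gamma_1S_1(\pi,\lambda)$; for $y_1^{[1]}(0)=y_1(\pi)=0$, $\Delta=C_1(\pi,\lambda)$; for $y_1^{[1]}(0)=y_1^{[1]}(\pi)=0$, $\Delta=C_1^{[1]}(\pi,\lambda)+\gamma_1C_1(\pi,\lambda)$. (ii) if $m>1$: pick an internal vertex $u$ of degree $s$; splitting $G$ at $u$ gives subtrees $G_1,\dots,G_s$ (each containing one edge of $E_u$, $u$ being a boundary vertex of each); let $\Delta_j^D,\Delta_j^N$ be the characteristic functions of the analogous problems on $G_j$ with the Dirichlet, resp. Neumann, condition at $u$, the same matching conditions at internal vertices and BC at the other boundary vertices; then $\Delta=\sum_{j=1}^s\Delta_j^N\prod_{k\ne j}\Delta_k^D$ (independent of the choice of $u$). Throughout, $\rho=\sqrt\lambda$ with $\mathrm{Re}\,\rho\ge0$. *)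

(* Defs.v *)
From mathcomp Require Import all_boot all_order all_algebra.
From mathcomp Require Import all_classical all_reals all_analysis.
From mathcomp Require Import complex.
Set Implicit Arguments.
Unset Strict Implicit.
Unset Printing Implicit Defensive.
Import Order.TTheory GRing.Theory Num.Theory.
Local Open Scope ring_scope.

Definition rcosh {R : realType} (y : R) : R := (expR y + expR (- y)) / 2.
Definition rsinh {R : realType} (y : R) : R := (expR y - expR (- y)) / 2.

Definition rc {R : realType} (x : R) : R[i] := Complex x 0.

(* sin(a+ib) = sin a cosh b + i cos a sinh b,
   cos(a+ib) = cos a cosh b - i sin a sinh b *)
Definition csin {R : realType} (z : R[i]) : R[i] :=
  Complex (sin (complex.Re z) * rcosh (complex.Im z))
          (cos (complex.Re z) * rsinh (complex.Im z)).
Definition ccos {R : realType} (z : R[i]) : R[i] :=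
  Complex (cos (complex.Re z) * rcosh (complex.Im z))
          (- (sin (complex.Re z) * rsinh (complex.Im z))).

Definition cpi {R : realType} : R[i] := rc (pi : R).

Definition cdifferentiable {R : realType} (y : R -> R[i]) : Prop :=
  forall x : R, derivable (fun t => complex.Re (y t)) x 1 /\
                derivable (fun t => complex.Im (y t)) x 1.

Definition cderiv {R : realType} (y : R -> R[i]) : R -> R[i] :=
  fun x => Complex (derive1 (fun t => complex.Re (y t)) x)
                   (derive1 (fun t => complex.Im (y t)) x).

(* y solves  l y = -y'' = lam * y  (zero potential: sigma = 0, so the
   quasi-derivative y^[1] = y' - 0*y is the ordinary derivative y'). *)
Definition solves_zero_pot {R : realType} (lam : R[i]) (y : R -> R[i]) : Prop :=
  [/\ cdifferentiable y, cdifferentiable (cderiv y) &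
      forall x : R, - cderiv (cderiv y) x = lam * y x].

(* Trees.  Vertices are natural numbers; edges are indexed by natural  *)
(* numbers j, with endpoints ep j = (vertex at x_j = 0, vertex at       *)
(* x_j = pi).  A (sub)graph is given by a sequence J of edge indices.   *)
Section Graphs.
Variable ep : nat -> nat * nat.

Definition verts (J : seq nat) : seq nat :=
  undup (flatten [seq [:: (ep j).1; (ep j).2] | j <- J]).

Definition incident (v : nat) (j : nat) : bool :=
  ((ep j).1 == v) || ((ep j).2 == v).

Definition deg (J : seq nat) (v : nat) : nat := count (incident v) J.

Definition adj (J : seq nat) : rel nat :=
  fun a b => has (fun j => (ep j == (a, b)) || (ep j == (b, a))) J.

Definition gconnected (J : seq nat) : Prop :=
  forall u v, u \in verts J -> v \in verts J ->
    exists p : seq nat, path (adj J) u p /\ last u p = v.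

Definition is_tree (J : seq nat) : Prop :=
  [/\ J != [::], uniq J, all (fun j => (ep j).1 != (ep j).2) J,
      gconnected J & size (verts J) = (size J).+1].

Definition boundary (J : seq nat) : seq nat :=
  [seq v <- verts J | deg J v == 1%N].

Definition is_split (J : seq nat) (u : nat) (parts : seq (seq nat)) : Prop :=
  [/\ u \in verts J, (1 < deg J u)%N, size parts = deg J u,
      perm_eq (flatten parts) J &
      forall i, (i < size parts)%N ->
        is_tree (nth [::] parts i) /\ deg (nth [::] parts i) u = 1%N].

(* boundary condition: bc v = true means Dirichlet, false means Neumann *)
Definition setbc (bc : nat -> bool) (u : nat) (b : bool) : nat -> bool :=
  fun v => if v == u then b else bc v.

End Graphs.

(*   Cp j lam = C_j(pi,lam),  C1p j lam = C_j^[1](pi,lam),             *)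
(*   Sp j lam = S_j(pi,lam),  S1p j lam = S_j^[1](pi,lam),  gam j.      *)
(* charfun J bc D  means: D is (a) characteristic function of the       *)
(* problem on the tree J with boundary conditions bc.  Since the paper *)
(* states the result is independent of the splitting vertex, any       *)
(* choice of splitting vertex is allowed.                             *)
Section CharFun.
Variable R : realType.
Variable ep : nat -> nat * nat.
Variables (Cp C1p Sp S1p : nat -> R[i] -> R[i]) (gam : nat -> R).

Definition charfun_edge (j : nat) (bc : nat -> bool) : R[i] -> R[i] :=
  fun lam =>
  match bc (ep j).1, bc (ep j).2 with
  | true, true => Sp j lam
  | true, false => S1p j lam + rc (gam j) * Sp j lam
  | false, true => Cp j lam
  | false, false => C1p j lam + rc (gam j) * Cp j lam
  end.

Inductive charfun : seq nat -> (nat -> bool) -> (R[i] -> R[i]) -> Prop :=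
| charfun_one (j : nat) (bc : nat -> bool) :
    (ep j).1 != (ep j).2 ->
    charfun [:: j] bc (charfun_edge j bc)
| charfun_split (J : seq nat) (bc : nat -> bool) (u : nat)
    (parts : seq (seq nat)) (DD DN : nat -> R[i] -> R[i]) :
    (1 < size J)%N ->
    is_tree ep J ->
    is_split ep J u parts ->
    (forall i, (i < size parts)%N ->
       charfun (nth [::] parts i) (setbc bc u true) (DD i)) ->
    (forall i, (i < size parts)%N ->
       charfun (nth [::] parts i) (setbc bc u false) (DN i)) ->
    charfun J bc (fun lam =>
      \sum_(i < size parts)
        DN i lam * \prod_(k < size parts | k != i) DD k lam).
End CharFun.

(* Bivariate polynomials:  p : {poly {poly C}},  p = sum_i X^i p_i(Y). *)
Definition eval2 {R : ringType} (p : {poly {poly R}}) (x y : R) : R :=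
  (map_poly (fun q : {poly R} => q.[y]) p).[x].

(* total degree (meaningful for p != 0) *)
Definition tdeg {R : ringType} (p : {poly {poly R}}) : nat :=
  \max_(i < size p | nth (0%R : {poly R}) p i != 0) addn i (size (nth (0%R : {poly R}) p i)).-1.

(* Main.v *)
Require Import Defs.
From mathcomp Require Import all_boot all_order all_algebra.
From mathcomp Require Import all_classical all_reals all_analysis.
From mathcomp Require Import complex.
From mathcomp Require Import ring lra zify.
Import Order.TTheory GRing.Theory Num.Theory.
Local Open Scope ring_scope.

Module Aux.
Set Implicit Arguments. Unset Strict Implicit. Unset Printing Implicit Defensive.

Section ODE.
Variable R : realType.
Implicit Types f g : R -> R.

Lemma isdC (k x : R) : is_derive x 1 (fun _ : R => k) 0.
Proof. exact: is_derive_cst. Qed.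
Lemma isdId (x : R) : is_derive x 1 (fun t : R => t) 1.
Proof. exact: is_derive_id. Qed.
Lemma isdD f g (x df dg : R) : is_derive x 1 f df -> is_derive x 1 g dg ->
  is_derive x 1 (fun t => f t + g t) (df + dg).
Proof. move=> ? ?; exact: is_deriveD. Qed.
Lemma isdN f (x df : R) : is_derive x 1 f df -> is_derive x 1 (fun t => - f t) (- df).
Proof. move=> ?; exact: is_deriveN. Qed.
Lemma isdB f g (x df dg : R) : is_derive x 1 f df -> is_derive x 1 g dg ->
  is_derive x 1 (fun t => f t - g t) (df - dg).
Proof. move=> ? ?; exact: is_deriveB. Qed.
Lemma isdM f g (x df dg : R) : is_derive x 1 f df -> is_derive x 1 g dg ->
  is_derive x 1 (fun t => f t * g t) (f x * dg + g x * df).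
Proof. move=> ? ?; exact: is_deriveM. Qed.
Lemma isdComp f g (x df dg : R) : is_derive (g x) 1 f df -> is_derive x 1 g dg ->
  is_derive x 1 (fun t => f (g t)) (df * dg).
Proof. move=> ? ?; exact: is_derive1_comp. Qed.


Lemma isdMk f (k x df : R) : is_derive x 1 f df -> is_derive x 1 (fun t => k * f t) (k * df).
Proof. by move=> H; apply: (is_derive_eq (isdM (isdC k x) H)); rewrite mulr0 addr0. Qed.

Lemma isdlin (k x : R) : is_derive x 1 (fun t => k * t) k.
Proof. by apply: (is_derive_eq (isdMk k (isdId x))); rewrite mulr1. Qed.

Lemma dcos (k t : R) : is_derive t 1 (fun u => cos (k * u)) (- sin (k * t) * k).
Proof. exact: isdComp (is_derive_cos _) (isdlin k t). Qed.
Lemma dsin (k t : R) : is_derive t 1 (fun u => sin (k * u)) (cos (k * t) * k).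
Proof. exact: isdComp (is_derive_sin _) (isdlin k t). Qed.
Lemma dexp (k t : R) : is_derive t 1 (fun u => expR (k * u)) (expR (k * t) * k).
Proof. exact: isdComp (is_derive_expR _) (isdlin k t). Qed.
Lemma dexpN (k t : R) : is_derive t 1 (fun u => expR (- (k * u))) (expR (- (k * t)) * - k).
Proof.
apply: isdComp (is_derive_expR _) _.
exact: isdN (isdlin k t).
Qed.
Lemma dcosh (k t : R) : is_derive t 1 (fun u => rcosh (k * u)) (k * rsinh (k * t)).
Proof.
rewrite /rcosh /rsinh.
apply: (is_derive_eq (isdM (f := fun u => expR (k*u) + expR (-(k*u))) (g := fun _ => 2^-1)
   (isdD (dexp k t) (dexpN k t)) (isdC _ _))).
by rewrite mulr0 add0r; field.
Qed.
Lemma dsinh (k t : R) : is_derive t 1 (fun u => rsinh (k * u)) (k * rcosh (k * t)).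
Proof.
rewrite /rcosh /rsinh.
apply: (is_derive_eq (isdM (f := fun u => expR (k*u) - expR (-(k*u))) (g := fun _ => 2^-1)
   (isdB (dexp k t) (dexpN k t)) (isdC _ _))).
by rewrite mulr0 add0r; field.
Qed.

End ODE.
Section ODE2.
Variable R : realType.
Local Notation C := R[i].
Implicit Types f g : R -> C.

Lemma ReM (z w : C) : complex.Re (z * w) = complex.Re z * complex.Re w - complex.Im z * complex.Im w.
Proof. by case: z => a b; case: w => c d. Qed.
Lemma ImM (z w : C) : complex.Im (z * w) = complex.Re z * complex.Im w + complex.Im z * complex.Re w.
Proof. by case: z => a b; case: w => c d. Qed.
Lemma ReD (z w : C) : complex.Re (z + w) = complex.Re z + complex.Re w.
Proof. by case: z => a b; case: w => c d. Qed.
Lemma ImD (z w : C) : complex.Im (z + w) = complex.Im z + complex.Im w.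
Proof. by case: z => a b; case: w => c d. Qed.
Lemma ReN (z : C) : complex.Re (- z) = - complex.Re z.
Proof. by case: z => a b. Qed.
Lemma ImN (z : C) : complex.Im (- z) = - complex.Im z.
Proof. by case: z => a b. Qed.
Lemma ReB (z w : C) : complex.Re (z - w) = complex.Re z - complex.Re w.
Proof. by rewrite ReD ReN. Qed.
Lemma ImB (z w : C) : complex.Im (z - w) = complex.Im z - complex.Im w.
Proof. by rewrite ImD ImN. Qed.
Lemma cext (z w : C) : complex.Re z = complex.Re w -> complex.Im z = complex.Im w -> z = w.
Proof. by case: z => a b; case: w => c d /= -> ->. Qed.

Definition cder (f f' : R -> C) := forall t : R,
  is_derive t 1 (fun u => complex.Re (f u)) (complex.Re (f' t)) /\
  is_derive t 1 (fun u => complex.Im (f u)) (complex.Im (f' t)).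

Lemma cder_eq f f' g' : cder f f' -> (forall t, f' t = g' t) -> cder f g'.
Proof. by move=> H E t; rewrite -E; apply: H. Qed.

Lemma cderC (k : C) : cder (fun _ => k) (fun _ => 0).
Proof. by move=> t; split; apply: isdC. Qed.

Lemma cderD f f' g g' : cder f f' -> cder g g' ->
  cder (fun t => f t + g t) (fun t => f' t + g' t).
Proof.
move=> Hf Hg t; case: (Hf t) (Hg t) => [fr fi] [gr gi]; split.
  have -> : (fun u => complex.Re (f u + g u)) = (fun u => complex.Re (f u) + complex.Re (g u)).
    by apply/funext => u; rewrite ReD.
  by rewrite ReD; apply: (isdD fr gr).
have -> : (fun u => complex.Im (f u + g u)) = (fun u => complex.Im (f u) + complex.Im (g u)).
  by apply/funext => u; rewrite ImD.
by rewrite ImD; apply: (isdD fi gi).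
Qed.

Lemma cderN f f' : cder f f' -> cder (fun t => - f t) (fun t => - f' t).
Proof.
move=> Hf t; case: (Hf t) => [fr fi]; split.
  have -> : (fun u => complex.Re (- f u)) = (fun u => - complex.Re (f u)).
    by apply/funext => u; rewrite ReN.
  by rewrite ReN; apply: (isdN fr).
have -> : (fun u => complex.Im (- f u)) = (fun u => - complex.Im (f u)).
  by apply/funext => u; rewrite ImN.
by rewrite ImN; apply: (isdN fi).
Qed.

Lemma cderB f f' g g' : cder f f' -> cder g g' ->
  cder (fun t => f t - g t) (fun t => f' t - g' t).
Proof. by move=> Hf Hg; apply: cderD Hf (cderN Hg). Qed.

Lemma cderM f f' g g' : cder f f' -> cder g g' ->
  cder (fun t => f t * g t) (fun t => f' t * g t + f t * g' t).
Proof.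
move=> Hf Hg t; case: (Hf t) (Hg t) => [fr fi] [gr gi]; split.
  have -> : (fun u => complex.Re (f u * g u)) = (fun u =>
     complex.Re (f u) * complex.Re (g u) - complex.Im (f u) * complex.Im (g u)).
    by apply/funext => u; rewrite ReM.
  apply: (is_derive_eq (isdB (isdM fr gr) (isdM fi gi))).
  by rewrite ReD !ReM; ring.
have -> : (fun u => complex.Im (f u * g u)) = (fun u =>
   complex.Re (f u) * complex.Im (g u) + complex.Im (f u) * complex.Re (g u)).
  by apply/funext => u; rewrite ImM.
apply: (is_derive_eq (isdD (isdM fr gi) (isdM fi gr))).
by rewrite ImD !ImM; ring.
Qed.

Lemma cderMk (k : C) f f' : cder f f' -> cder (fun t => k * f t) (fun t => k * f' t).
Proof.
move=> Hf; apply: cder_eq; first exact: cderM (cderC k) Hf.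
by move=> t /=; rewrite mul0r add0r.
Qed.

Lemma cder_cst f : cder f (fun _ => 0) -> forall x y, f x = f y.
Proof.
move=> H x y; apply: cext.
  by apply: (is_derive_0_is_cst (f := fun u => complex.Re (f u))) => t; case: (H t).
by apply: (is_derive_0_is_cst (f := fun u => complex.Im (f u))) => t; case: (H t).
Qed.

Lemma ReMrc (z : C) (u : R) : complex.Re (z * rc u) = complex.Re z * u.
Proof. by rewrite ReM /= mulr0 subr0. Qed.
Lemma ImMrc (z : C) (u : R) : complex.Im (z * rc u) = complex.Im z * u.
Proof. by rewrite ImM /= mulr0 add0r. Qed.

Section Trig.
Variable rho : C.
Definition cf (t : R) := ccos (rho * rc t).
Definition sf (t : R) := csin (rho * rc t).

Lemma cder_cf : cder cf (fun t => - rho * sf t).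
Proof.
move=> t; split.
  have -> : (fun u => complex.Re (cf u)) = (fun u =>
     cos (complex.Re rho * u) * rcosh (complex.Im rho * u)).
    by apply/funext => u; rewrite /cf /ccos /= ReMrc ImMrc.
  apply: (is_derive_eq (isdM (dcos _ t) (dcosh _ t))).
  by rewrite ReM /sf /csin /= ReMrc ImMrc; ring.
have -> : (fun u => complex.Im (cf u)) = (fun u =>
   - (sin (complex.Re rho * u) * rsinh (complex.Im rho * u))).
  by apply/funext => u; rewrite /cf /ccos /= ReMrc ImMrc.
apply: (is_derive_eq (isdN (isdM (dsin _ t) (dsinh _ t)))).
by rewrite ImM /sf /csin /= ReMrc ImMrc; ring.
Qed.

Lemma cder_sf : cder sf (fun t => rho * cf t).
Proof.
move=> t; split.
  have -> : (fun u => complex.Re (sf u)) = (fun u =>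
     sin (complex.Re rho * u) * rcosh (complex.Im rho * u)).
    by apply/funext => u; rewrite /sf /csin /= ReMrc ImMrc.
  apply: (is_derive_eq (isdM (dsin _ t) (dcosh _ t))).
  by rewrite ReM /cf /ccos /= ReMrc ImMrc; ring.
have -> : (fun u => complex.Im (sf u)) = (fun u =>
   cos (complex.Re rho * u) * rsinh (complex.Im rho * u)).
  by apply/funext => u; rewrite /sf /csin /= ReMrc ImMrc.
apply: (is_derive_eq (isdM (dcos _ t) (dsinh _ t))).
by rewrite ImM /cf /ccos /= ReMrc ImMrc; ring.
Qed.


Lemma cf0 : cf 0 = 1.
Proof.
rewrite /cf /ccos ReMrc ImMrc !mulr0 cos0 sin0 /rcosh /rsinh oppr0 expR0 mul0r.
apply: cext => /=; last by rewrite oppr0.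
by rewrite mul1r; field.
Qed.
Lemma sf0 : sf 0 = 0.
Proof.
rewrite /sf /csin ReMrc ImMrc !mulr0 cos0 sin0 /rsinh oppr0 subrr mul0r.
by rewrite mul0r mulr0.
Qed.
End Trig.

Lemma chsh (b : R) : rcosh b ^+ 2 - rsinh b ^+ 2 = 1.
Proof.
have EF : expR b * expR (- b) = 1 by rewrite -expRD subrr expR0.
rewrite /rcosh /rsinh.
have -> : ((expR b + expR (- b)) / 2) ^+ 2 - ((expR b - expR (- b)) / 2) ^+ 2
   = expR b * expR (- b) by field.
exact: EF.
Qed.

Lemma cs1 (z : C) : ccos z ^+ 2 + csin z ^+ 2 = 1.
Proof.
have H := chsh (complex.Im z); have T := cos2Dsin2 (complex.Re z).
apply: cext; rewrite /ccos /csin !expr2 ?ReD ?ImD ?ReM ?ImM /=.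
  rewrite -H -[X in _ = X - _]mul1r -[X in _ = _ - X]mul1r -T; ring.
ring.
Qed.

Lemma cder_diff f : cdifferentiable f -> cder f (cderiv f).
Proof.
move=> df t; case: (df t) => [r i]; split; rewrite /cderiv /= derive1E;
exact: derivableP.
Qed.

Lemma ode_sol (lam rho : C) (y : R -> C) :
  rho ^+ 2 = lam -> rho != 0 -> solves_zero_pot lam y ->
  y pi = y 0 * cf rho pi + cderiv y 0 * sf rho pi / rho /\
  cderiv y pi = cderiv y 0 * cf rho pi - rho * y 0 * sf rho pi.
Proof.
move=> rl rn [dy ddy Heq].
have Hy := cder_diff dy.
have Hy0 := cder_diff ddy.
have Hy' : cder (cderiv y) (fun t => - lam * y t).
  by apply: (cder_eq Hy0) => t; rewrite mulNr -Heq opprK.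
have W1 := cder_cst (cder_eq (cderB (cderM Hy (cderMk (- rho) (@cder_sf rho)))
                              (cderM Hy' (@cder_cf rho))) (g' := fun _ => 0) _) pi 0.
have W2 := cder_cst (cder_eq (cderB (cderM Hy (cderMk rho (@cder_cf rho)))
                              (cderM Hy' (@cder_sf rho))) (g' := fun _ => 0) _) pi 0.
move: W1 W2; rewrite /= !cf0 !sf0 => W1 W2.
have {}W1 := W1 (fun t => ltac:(rewrite -rl; ring)).
have {}W2 := W2 (fun t => ltac:(rewrite -rl; ring)).
have CS := cs1 (rho * rc pi).
rewrite /cf /sf in W1 W2 *.
set c := ccos _ in W1 W2 CS *; set s := csin _ in W1 W2 CS *.
split.
  apply: (mulfI rn).
  have -> : rho * y pi = rho * y pi * (c ^+ 2 + s ^+ 2) by rewrite CS mulr1.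
  have E : rho * y pi * (c ^+ 2 + s ^+ 2) =
     - s * (y pi * (- rho * s) - cderiv y pi * c) + c * (y pi * (rho * c) - cderiv y pi * s) by ring.
  rewrite E W1 W2; field; exact: rn.
have -> : cderiv y pi = cderiv y pi * (c ^+ 2 + s ^+ 2) by rewrite CS mulr1.
have E : cderiv y pi * (c ^+ 2 + s ^+ 2) =
   - c * (y pi * (- rho * s) - cderiv y pi * c) - s * (y pi * (rho * c) - cderiv y pi * s) by ring.
rewrite E W1 W2; ring.
Qed.

End ODE2.

Local Close Scope ring_scope.
Section GraphFacts.
Variable ep : nat -> nat * nat.

Lemma mem_verts J v : (v \in verts ep J) = has (incident ep v) J.
Proof.
rewrite /verts mem_undup; elim: J => [//|j J IH] /=.
rewrite !inE -IH /incident (eq_sym v) (eq_sym v) orbA //.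
Qed.

Lemma deg_gt0 J v : (0 < deg ep J v) = (v \in verts ep J).
Proof. by rewrite mem_verts -has_count. Qed.

Lemma deg_flatten parts J v : perm_eq (flatten parts) J ->
  deg ep J v = \sum_(p <- parts) deg ep p v.
Proof.
move=> pJ; rewrite /deg -(permP pJ) count_flatten sumnE big_map //.
Qed.

Lemma sum_one (T : eqType) (s : seq T) (f : T -> nat) x :
  x \in s -> f x = 1%N -> (\sum_(p <- s) (0 < f p) <= 1)%N ->
  \sum_(p <- s) f p = 1%N.
Proof.
elim: s => [//|y s IH]; rewrite inE !big_cons.
case: (eqVneq x y) => [<- _ fx1|xy /= xs fx1].
  rewrite fx1 /= add1n ltnS leqn0 sum_nat_seq_eq0 => /allP H.
  have : \sum_(p <- s) f p == 0%N.
    rewrite sum_nat_seq_eq0; apply/allP => p ps; move: (H p ps) => /=.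
    by rewrite eqb0 -leqNgt leqn0.
  by move/eqP ->.
move=> H; have H2 : (\sum_(p <- s) (0 < f p) <= 1)%N.
  by apply: leq_trans H; rewrite leq_addl.
rewrite (IH xs fx1 H2).
have : (0 < \sum_(p <- s) (0 < f p))%N.
  rewrite (big_rem x xs) /= fx1 //.
move: H; case: (f y) => [//|n] /=.
by rewrite add1n ltnS leqn0 => /eqP -> .
Qed.

Lemma flatten_subseq (T : eqType) (A : Type) (r : seq A) (f g : A -> seq T) :
  (forall a, subseq (f a) (g a)) ->
  subseq (flatten [seq f a | a <- r]) (flatten [seq g a | a <- r]).
Proof.
move=> H; elim: r => [//|a r IH] /=; exact: cat_subseq.
Qed.

Lemma boundary_uniq J : uniq (boundary ep J).
Proof. exact/filter_uniq/undup_uniq. Qed.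

Lemma split_boundary J u parts bc :
  is_tree ep J -> is_split ep J u parts ->
  count bc (boundary ep J) =
  \sum_(p <- parts) count bc (rem u (boundary ep p)).
Proof.
case=> [_ uJ _ _ szJ] [uvJ degu szp permJ Hp].
have Hp' : forall p, p \in parts -> is_tree ep p /\ deg ep p u = 1%N.
  by move=> p /(nthP [::]) [i ip <-]; apply: Hp.
have szV : forall p, p \in parts -> size (verts ep p) = (size p).+1.
  by move=> p /Hp' [[]].
have uvp : forall p, p \in parts -> u \in verts ep p.
  by move=> p /Hp' [_ d1]; rewrite -deg_gt0 d1.
have sumsz : size J = \sum_(p <- parts) size p.
  by rewrite -(perm_size permJ) size_flatten /shape sumnE big_map.
set V := [seq rem u (verts ep p) | p <- parts].
have uW : uniq (u :: flatten V).
  apply: (leq_size_uniq (undup_uniq _ : uniq (verts ep J))).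
    move=> v; rewrite mem_verts => /hasP [j jJ incj]; rewrite inE.
    case: eqP => //= /eqP vu; apply/flattenP.
    have : j \in flatten parts by rewrite (perm_mem permJ).
    case/flattenP => p pP jp.
    exists (rem u (verts ep p)); first by apply/mapP; exists p.
    rewrite mem_rem_uniq ?undup_uniq // inE vu /= mem_verts.
    by apply/hasP; exists j.
  rewrite /= size_flatten /shape -map_comp sumnE big_map szJ sumsz ltnS.
  rewrite big_seq [X in (_ <= X)%N]big_seq; apply: leq_sum => p pP /=.
  by rewrite size_rem ?uvp // szV.
move: uW; rewrite cons_uniq => /andP [uV uniqV].
have degJ : forall v, deg ep J v = \sum_(p <- parts) deg ep p v.
  by move=> v; apply: deg_flatten.
set B := flatten [seq rem u (boundary ep p) | p <- parts].
have uB : uniq B.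
  apply: subseq_uniq uniqV; apply: flatten_subseq => p.
  apply: subseq_rem; exact: filter_subseq.
have memB : boundary ep J =i B.
  move=> v; rewrite mem_filter; apply/idP/idP.
  - case/andP=> /eqP dv vJ.
    have vu : v != u.
      by apply/eqP=> vu; move: degu; rewrite -vu dv.
    have [p pP dp] : exists2 p, p \in parts & (0 < deg ep p v)%N.
      apply/hasP; apply/negPn/negP => /hasPn H.
      move: dv; rewrite degJ big_seq big1 // => p /H.
      by rewrite lt0n negbK => /eqP.
    have dp1 : deg ep p v = 1%N.
      apply/eqP; rewrite eqn_leq dp andbT -dv degJ (big_rem p pP) /=.
      exact: leq_addr.
    apply/flattenP; exists (rem u (boundary ep p)); first by apply/mapP; exists p.
    rewrite mem_rem_uniq ?boundary_uniq // inE vu /= mem_filter dp1 eqxx /=.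
    by rewrite -deg_gt0 dp1.
  - case/flattenP => s /mapP [p pP ->].
    rewrite mem_rem_uniq ?boundary_uniq // inE => /andP [vu].
    rewrite mem_filter => /andP [/eqP dp1 vp].
    have dJ : deg ep J v = 1%N.
      rewrite degJ; apply: (sum_one pP dp1).
      have <- : count_mem v (flatten V) = \sum_(p <- parts) (0 < deg ep p v)%N.
        rewrite count_flatten sumnE /V -map_comp big_map; apply: eq_big_seq => q qP /=.
        by rewrite count_uniq_mem ?rem_uniq ?undup_uniq // mem_rem_uniq ?undup_uniq // inE vu deg_gt0.
      by rewrite count_uniq_mem // leq_b1.
    by rewrite dJ eqxx -deg_gt0 dJ.
have pB : perm_eq (boundary ep J) B by apply: uniq_perm => //; apply: boundary_uniq.
by rewrite (permP pB) count_flatten sumnE -map_comp big_map.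
Qed.

Lemma count_setbc_rem bc u s : uniq s -> u \in s ->
  count (setbc bc u false) s = count bc (rem u s) /\
  count (setbc bc u true) s = (count bc (rem u s)).+1.
Proof.
move=> us uin; have pe := perm_to_rem uin.
rewrite !(permP pe) /= /setbc eqxx /=.
have : u \notin rem u s by rewrite mem_rem_uniq // inE eqxx.
move=> nu.
have E : forall b, count (fun v => if v == u then b else bc v) (rem u s) = count bc (rem u s).
  move=> b; apply: eq_in_count => v vin /=.
  by case: eqP => // vu; rewrite vu in vin; rewrite vin in nu.
by rewrite !E.
Qed.

Lemma boundary_one j : (ep j).1 != (ep j).2 ->
  boundary ep [:: j] = [:: (ep j).1; (ep j).2].
Proof.
move=> ne; rewrite /boundary /verts /= !inE (negbTE ne) /=.
rewrite /deg /= /incident !eqxx /= orbT /=.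
done.
Qed.

End GraphFacts.
Local Open Scope ring_scope.

Section PolyGen.
Variable K : idomainType.

Lemma coef_size (p : {poly K}) N : p`_N != 0 -> (N < size p)%N.
Proof. by move=> nz; rewrite ltnNge; apply/negP => H; move: nz; rewrite nth_default ?eqxx. Qed.

Lemma deg_mul (p q : {poly K}) : p != 0 -> q != 0 ->
  (size (p * q)).-1 = ((size p).-1 + (size q).-1)%N.
Proof.
move=> pn qn; rewrite size_mul //.
move: pn qn; rewrite -!size_poly_gt0; lia.
Qed.

Lemma deg_prod n (F : 'I_n -> {poly K}) : (forall i, F i != 0) ->
  (size (\prod_i F i)).-1 = (\sum_i (size (F i)).-1)%N.
Proof.
elim: n F => [|n IH] F H; first by rewrite !big_ord0 size_poly1.
have P : \prod_(i < n) F (widen_ord (leqnSn n) i) != 0.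
  by apply/prodf_neq0 => i _; apply: H.
by rewrite !big_ord_recr /= deg_mul ?IH //.
Qed.

Lemma size_sum_same n (T : 'I_n -> {poly K}) N :
  (forall i, (size (T i) <= N.+1)%N) -> \sum_i (T i)`_N != 0 ->
  size (\sum_i T i) = N.+1 /\ lead_coef (\sum_i T i) = \sum_i (T i)`_N.
Proof.
move=> H nz.
have le : (size (\sum_i T i)%R <= N.+1)%N.
  apply: leq_trans; first exact: size_sum.
  apply/bigmax_leqP_seq => i _ _; exact: H.
have sz : size (\sum_i T i) = N.+1.
  apply/eqP; rewrite eqn_leq le /=; apply: coef_size; by rewrite coef_sum.
by split => //; rewrite lead_coefE sz /= coef_sum.
Qed.

End PolyGen.

Lemma odd_sum_not n (x : 'I_n -> nat) :
  odd (\sum_(k < n) (~~ odd (x k) : nat)) = odd n (+) odd (\sum_k x k).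
Proof.
elim: n x => [|n IH] x; first by rewrite !big_ord0.
rewrite !big_ord_recr /= !oddD IH oddb.
by case: (odd n); case: (odd (\sum_(i < n) x (widen_ord (leqnSn n) i))); case: (odd _).
Qed.

Lemma prod_expr (T : comPzRingType) n (x : T) (f : 'I_n -> nat) :
  \prod_(k < n) x ^+ f k = x ^+ (\sum_k f k).
Proof.
elim: n f => [|n IH] f; first by rewrite !big_ord0 expr0.
by rewrite !big_ord_recr /= IH exprD.
Qed.

Lemma prod_exprz (T : fieldType) n (x : T) (f : 'I_n -> int) : x != 0 ->
  \prod_(k < n) x ^ f k = x ^ (\sum_k f k).
Proof.
move=> xn; elim: n f => [|n IH] f; first by rewrite !big_ord0 expr0z.
by rewrite !big_ord_recr /= IH expfzDr.
Qed.

Section Main.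
Variable R : realType.
Local Notation C := R[i].
Variable ep : nat -> nat * nat.
Variables C0 S0 : R -> C -> C.
Hypothesis HCS : forall lam : C,
     [/\ solves_zero_pot lam (fun x => C0 x lam), C0 0 lam = 1 &
         cderiv (fun x => C0 x lam) 0 = 0] /\
     [/\ solves_zero_pot lam (fun x => S0 x lam), S0 0 lam = 0 &
         cderiv (fun x => S0 x lam) 0 = 1].

Definition ii : C := Complex 0 1.
Lemma ii2 : ii * ii = -1.
Proof. by apply: cext; rewrite ?ReM ?ImM /= ?mulr0 ?mul0r ?mulr1; lra. Qed.
Lemma ii_neq0 : ii != 0.
Proof. by apply/eqP => /(congr1 (@complex.Im R)) /= /eqP; rewrite oner_eq0. Qed.
Lemma mii2 : (- ii) ^+ 2 = -1.
Proof. by rewrite sqrrN expr2 ii2. Qed.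

Definition sn (rho : C) := csin (rho * cpi).
Definition cs (rho : C) := ccos (rho * cpi).

Lemma edge_vals lam rho : lam != 0 -> rho ^+ 2 = lam ->
  [/\ C0 pi lam = cs rho, cderiv (fun x => C0 x lam) pi = - rho * sn rho,
      S0 pi lam = sn rho / rho & cderiv (fun x => S0 x lam) pi = cs rho].
Proof.
move=> ln rl.
have rn : rho != 0.
  by apply/eqP => r0; move: ln; rewrite -rl r0 expr0n /= eqxx.
have [[sC c0 c0'] [sS s0 s0']] := HCS lam.
have [a1 a2] := ode_sol rl rn sC; have [b1 b2] := ode_sol rl rn sS.
move: a1 a2 b1 b2; rewrite c0 c0' s0 s0' /cf /sf /sn /cs /cpi => -> -> -> ->.
split; ring.
Qed.

Definition dc J bc := count bc (boundary ep J).

Definition Inv J bc (D : C -> C) (Q : {poly C}) (k : nat) : Prop :=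
  [/\ (0 < k)%N,
     lead_coef Q * (- ii) ^+ (~~ odd (dc J bc)) = k%:R * ii * (- ii) ^+ (dc J bc),
     size Q = ((size J).+1 - (~~ odd (dc J bc)))%N,
     (forall z, Q.[z] = (-1) ^+ (size Q).-1 * Q.[- z]) &
     (forall lam rho, lam != 0 -> rho ^+ 2 = lam ->
        D lam = rho ^ (1 - (dc J bc)%:Z) * (sn rho ^+ (~~ odd (dc J bc)) * Q.[cs rho]))].
Definition Pinv J bc D := exists Q k, Inv J bc D Q k.

Local Notation Cp := (fun (_ : nat) lam => C0 pi lam).
Local Notation C1p := (fun (_ : nat) lam => cderiv (fun x => C0 x lam) pi).
Local Notation Sp := (fun (_ : nat) lam => S0 pi lam).
Local Notation S1p := (fun (_ : nat) lam => cderiv (fun x => S0 x lam) pi).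

Lemma base_inv j bc : (ep j).1 != (ep j).2 ->
  Pinv [:: j] bc (charfun_edge ep Cp C1p Sp S1p (fun _ => 0) j bc).
Proof.
move=> ne; rewrite /Pinv /Inv /dc boundary_one //= /charfun_edge.
have rc0 : rc (0 : R) = 0 by [].
case: (bc (ep j).1); case: (bc (ep j).2) => /=.
- exists 1, 1%N; split => //.
  + by rewrite lead_coef1 mii2 expr1 !mul1r mulrN1.
  + by rewrite size_poly1.
  + by move=> z; rewrite !hornerC size_poly1 expr0 mul1r.
  move=> lam rho ln rl; have [_ _ -> _] := edge_vals ln rl.
  by rewrite hornerC expr1 mulr1 exprN1 mulrC.
- exists 'X, 1%N; split => //.
  + by rewrite /= lead_coefX expr0 mulr1 expr1 mul1r mulrN ii2 opprK.
  + by rewrite size_polyX.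
  + by move=> z; rewrite !hornerX size_polyX expr1 mulN1r opprK.
  move=> lam rho ln rl; have [_ _ _ ->] := edge_vals ln rl.
  by rewrite rc0 mul0r addr0 hornerX expr0 mul1r subrr expr0z mul1r.
- exists 'X, 1%N; split => //.
  + by rewrite /= lead_coefX expr0 mulr1 expr1 mul1r mulrN ii2 opprK.
  + by rewrite size_polyX.
  + by move=> z; rewrite !hornerX size_polyX expr1 mulN1r opprK.
  move=> lam rho ln rl; have [-> _ _ _] := edge_vals ln rl.
  by rewrite hornerX expr0 mul1r subrr expr0z mul1r.
- exists (-1), 1%N; split => //.
  + by rewrite /= lead_coefN lead_coef1 expr0 expr1 mulr1 mul1r mulN1r opprK.
  + by rewrite size_polyN size_poly1.
  + by move=> z; rewrite !hornerN !hornerC size_polyN size_poly1 expr0 mul1r.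
  move=> lam rho ln rl; have [_ -> _ _] := edge_vals ln rl.
  by rewrite rc0 mul0r addr0 hornerN hornerC expr1 subr0 expr1z mulrN1 mulrN mulNr.
Qed.


Lemma inv_nz J bc D Q k : Inv J bc D Q k -> Q != 0.
Proof.
case=> k0 lc _ _ _; apply/eqP => Q0; move: lc; rewrite Q0 lead_coef0 mul0r.
move/esym/eqP; rewrite !mulf_eq0 pnatr_eq0 (negbTE ii_neq0) /=.
rewrite expf_eq0 oppr_eq0 (negbTE ii_neq0) andbF !orbF.
by move/eqP => k00; move: k0; rewrite k00.
Qed.

Lemma lead1X2 : lead_coef (1 - 'X^2 : {poly C}) = -1.
Proof. by rewrite -opprB lead_coefN -polyC1 lead_coefXnsubC. Qed.
Lemma size1X2 : size (1 - 'X^2 : {poly C}) = 3%N.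
Proof. by rewrite -opprB size_polyN -polyC1 size_XnsubC. Qed.

Lemma ii_pow n d : ii ^+ n.+1 * (-ii) ^+ (d + n) = ii * (-ii) ^+ d.
Proof.
rewrite exprS exprD -mulrA; congr (_ * _).
rewrite mulrCA -exprMn mulrN ii2 opprK expr1n mulr1 //.
Qed.

Lemma mii_split E : (-ii) ^+ E = (-ii) ^+ (odd E) * (-1) ^+ (E./2).
Proof.
by rewrite -{1}(odd_double_half E) exprD -mul2n exprM mii2.
Qed.

Lemma sum_int n (x : 'I_n -> nat) :
  \sum_(k < n) ((1 : int) - (x k)%:Z) = n%:Z - (\sum_k x k)%:Z.
Proof.
rewrite sumrB sumr_const card_ord; congr (_ - _).
  by rewrite -natz.
by rewrite -natz natr_sum; apply: eq_bigr => k _; rewrite natz.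
Qed.


Lemma nzK (k d : nat) : (0 < k)%N -> k%:R * ii * (-ii) ^+ d != 0.
Proof.
move=> k0; rewrite !mulf_neq0 ?pnatr_eq0 -?lt0n ?ii_neq0 //.
by rewrite expf_neq0 // oppr_eq0 ii_neq0.
Qed.

Lemma prod_const n (x : C) : \prod_(k < n) x = x ^+ n.
Proof.
elim: n => [|n IH]; first by rewrite big_ord0 expr0.
by rewrite big_ord_recr /= IH exprSr.
Qed.

Lemma split_inv J bc u parts (DD DN : nat -> C -> C) :
  is_tree ep J -> is_split ep J u parts ->
  (forall i, (i < size parts)%N -> Pinv (nth [::] parts i) (setbc bc u true) (DD i)) ->
  (forall i, (i < size parts)%N -> Pinv (nth [::] parts i) (setbc bc u false) (DN i)) ->
  Pinv J bc (fun lam => \sum_(i < size parts) DN i lam * \prod_(k < size parts | k != i) DD k lam).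
Proof.
move=> tJ sp HD HN.
have [uJ degu szp permJ Hp] := sp.
set n := size parts.
have n0 : (0 < n)%N by rewrite /n szp; lia.
pose p (k : 'I_n) := nth [::] parts k.
have bnd : forall k : 'I_n, u \in boundary ep (p k).
  move=> k; have [_ d1] := Hp k (ltn_ord k).
  by rewrite mem_filter d1 eqxx /= -deg_gt0 d1.
pose dN (k : 'I_n) := dc (p k) (setbc bc u false).
have dcs : forall k : 'I_n, forall b : bool, dc (p k) (setbc bc u b) = (dN k + b)%N.
  move=> k b; have [E1 E2] := count_setbc_rem bc (boundary_uniq ep (p k)) (bnd k).
  by rewrite /dN /dc; case: b; rewrite ?E1 ?E2 ?addn0 ?addn1.
have dsum : dc J bc = (\sum_(k < n) dN k)%N.
  rewrite /dc (split_boundary _ tJ sp) (big_nth [::]) big_mkord.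
  apply: eq_bigr => k _.
  by have [E1 _] := count_setbc_rem bc (boundary_uniq ep (p k)) (bnd k); rewrite /dN /dc E1.
have msum : size J = (\sum_(k < n) size (p k))%N.
  by rewrite -(perm_size permJ) size_flatten /shape sumnE big_map (big_nth [::]) big_mkord.
have m1 : forall k : 'I_n, (0 < size (p k))%N.
  move=> k; have [[ne _ _ _ _] _] := Hp k (ltn_ord k).
  by rewrite lt0n size_eq0.
have [fD HfD] : {f : 'I_n -> {poly C} * nat &
    forall k, Inv (p k) (setbc bc u true) (DD k) (f k).1 (f k).2}.
  apply: (@boolp.choice _ _ (fun k f => Inv (p k) (setbc bc u true) (DD k) f.1 f.2)).
  move=> k; case: (HD k (ltn_ord k)) => Q [kk H]; by exists (Q, kk).
have [fN HfN] : {f : 'I_n -> {poly C} * nat &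
    forall k, Inv (p k) (setbc bc u false) (DN k) (f k).1 (f k).2}.
  apply: (@boolp.choice _ _ (fun k f => Inv (p k) (setbc bc u false) (DN k) f.1 f.2)).
  move=> k; case: (HN k (ltn_ord k)) => Q [kk H]; by exists (Q, kk).
pose G (i k : 'I_n) := if k == i then DN k else DD k.
pose Q' (i k : 'I_n) := if k == i then (fN k).1 else (fD k).1.
pose K' (i k : 'I_n) := if k == i then (fN k).2 else (fD k).2.
have Hik : forall i k, Inv (p k) (setbc bc u (k != i)) (G i k) (Q' i k) (K' i k).
  by move=> i k; rewrite /G /Q' /K'; case: eqP => _ /=; [apply: HfN|apply: HfD].
pose d' (i k : 'I_n) := dc (p k) (setbc bc u (k != i)).
pose e (i k : 'I_n) := (~~ odd (d' i k) : nat).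
set d := dc J bc.
pose o := (~~ odd d : nat).
pose E (i : 'I_n) := (\sum_k e i k)%N.
pose h (i : 'I_n) := (E i)./2.
pose T (i : 'I_n) := (1 - 'X^2) ^+ h i * \prod_k Q' i k.
pose N := (size J - o)%N.
have F1 : forall i, ((\sum_k d' i k) + 1 = d + n)%N.
  move=> i; rewrite /d dsum.
  have -> : (\sum_k d' i k = \sum_k dN k + \sum_k (k != i : nat))%N.
    by rewrite -big_split; apply: eq_bigr => k _; rewrite /d' dcs.
  rewrite -addnA; congr (_ + _)%N.
  rewrite (bigD1 i) //= eqxx add0n.
  have -> : (\sum_(k | k != i) (k != i : nat) = \sum_(k | k != i) 1)%N.
    by apply: eq_bigr => k ->.
  by rewrite sum1dep_card cardsE cardC1 card_ord addn1 prednK.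
have F2 : forall i, odd (E i) = ~~ odd d.
  move=> i; have := congr1 odd (F1 i); rewrite !oddD /= addbT /E /e odd_sum_not.
  by case: (odd (\sum_k d' i k)); case: (odd d); case: (odd n).
have Qnz : forall i k, Q' i k != 0 by move=> i k; exact: inv_nz (Hik i k).
have X2nz : (1 - 'X^2 : {poly C}) != 0 by rewrite -size_poly_gt0 size1X2.
have Tnz : forall i, T i != 0.
  move=> i; apply: mulf_neq0; first exact: expf_neq0.
  by apply/prodf_neq0 => k _.
have degT : forall i, (size (T i)).-1 = (2 * h i + \sum_k (size (Q' i k)).-1)%N.
  move=> i; rewrite /T deg_mul; [|exact: expf_neq0|by apply/prodf_neq0 => k _].
  by rewrite size_exp size1X2 deg_prod.
have szQ : forall i k, (size (Q' i k)).-1 = (size (p k) - e i k)%N.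
  move=> i0 k0; have [_ _ sz _ _] := Hik i0 k0; rewrite sz /e.
  change (dc (p k0) (setbc bc u (k0 != i0))) with (d' i0 k0).
  have := m1 k0; case: (~~ odd (d' i0 k0)) => /=; lia.
have sumE : forall i, (\sum_k (size (p k) - e i k) + E i = size J)%N.
  move=> i; rewrite msum /E -big_split; apply: eq_bigr => k _ /=.
  rewrite subnK //; apply: leq_trans (m1 k); exact: leq_b1.
have F4 : forall i, size (T i) = N.+1.
  move=> i; rewrite -(prednK (_ : 0 < size (T i))%N); last by rewrite size_poly_gt0.
  congr S; rewrite degT (eq_bigr _ (fun k _ => szQ i k)).
  have SZ := sumE i; have OD := odd_double_half (E i); rewrite F2 -mul2n in OD.
  rewrite /N /o /h; move: SZ OD; case: (~~ odd d) => /=; lia.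
have F5 : forall i, lead_coef (T i) * (- ii) ^+ o = (\prod_k K' i k)%:R * ii * (- ii) ^+ d.
  move=> i.
  have LQ : forall k, lead_coef (Q' i k) * (-ii) ^+ (e i k) = (K' i k)%:R * ii * (-ii) ^+ (d' i k).
    by move=> k; have [_ lc _ _ _] := Hik i k; exact: lc.
  have P : \prod_k (lead_coef (Q' i k) * (-ii) ^+ (e i k)) =
           \prod_k ((K' i k)%:R * ii * (-ii) ^+ (d' i k)) by apply: eq_bigr => k _; apply: LQ.
  rewrite !big_split /= prod_expr prod_const prod_expr -natr_prod in P.
  have EE : (-ii) ^+ (E i) = (-ii) ^+ o * (-1) ^+ (h i) by rewrite mii_split F2.
  have SD : (\sum_k d' i k = d + n.-1)%N by have := F1 i; lia.
  rewrite /T lead_coefM lead_coef_exp lead1X2 lead_coef_prod.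
  transitivity (\prod_k lead_coef (Q' i k) * (-ii) ^+ (E i)); first by rewrite EE; ring.
  rewrite P SD; have := ii_pow n.-1 d; rewrite prednK // => IP.
  by rewrite -mulrA IP mulrA.
have H1 : forall w, (1 - 'X^2 : {poly C}).[w] = 1 - w ^+ 2.
  by move=> w; rewrite !hornerE.
have F6 : forall i z, (T i).[z] = (-1) ^+ N * (T i).[- z].
  move=> i z.
  have ND : N = (2 * h i + \sum_k (size (Q' i k)).-1)%N by rewrite -degT F4.
  rewrite ND exprD exprM sqrrN !expr1n mul1r.
  rewrite /T !hornerM !horner_exp !H1 sqrrN !horner_prod.
  have -> : \prod_k (Q' i k).[z] = \prod_k ((-1) ^+ (size (Q' i k)).-1 * (Q' i k).[- z]).
    by apply: eq_bigr => k _; have [_ _ _ par _] := Hik i k; apply: par.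
  by rewrite big_split /= prod_expr mulrCA.
have F7 : forall i lam rho, lam != 0 -> rho ^+ 2 = lam ->
    \prod_k G i k lam = rho ^ (1 - d%:Z) * (sn rho ^+ o * (T i).[cs rho]).
  move=> i lam rho ln rl.
  have rn : rho != 0.
    by apply/eqP => r0; move: ln; rewrite -rl r0 expr0n /= eqxx.
  have -> : \prod_k G i k lam = \prod_k (rho ^ (1 - (d' i k)%:Z) *
        (sn rho ^+ (e i k) * (Q' i k).[cs rho])).
    by apply: eq_bigr => k _; have [_ _ _ _ V] := Hik i k; apply: V.
  rewrite !big_split /= prod_exprz // prod_expr sum_int.
  have -> : (n%:Z - (\sum_k d' i k)%:Z) = 1 - d%:Z.
    have := F1 i; set S := (\sum_k d' i k)%N; lia.
  have S2 : sn rho ^+ 2 = 1 - cs rho ^+ 2.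
    by rewrite -(cs1 (rho * cpi)) /sn /cs; ring.
  have SE : sn rho ^+ E i = sn rho ^+ o * (1 - cs rho ^+ 2) ^+ h i.
    by rewrite -{1}(odd_double_half (E i)) exprD F2 -mul2n exprM S2.
  rewrite SE /T hornerM horner_exp H1 horner_prod; ring.
pose K := (\sum_i \prod_k K' i k)%N.
have K0 : (0 < K)%N.
  rewrite /K (bigD1 (Ordinal n0)) //= addn_gt0; apply/orP; left.
  by apply: prodn_gt0 => k; have [] := Hik (Ordinal n0) k.
have LS : (\sum_i (T i)`_N) * (-ii) ^+ o = K%:R * ii * (-ii) ^+ d.
  rewrite mulr_suml.
  have -> : \sum_i (T i)`_N * (-ii) ^+ o = \sum_i ((\prod_k K' i k)%:R * ii * (-ii) ^+ d).
    by apply: eq_bigr => i _; rewrite -F5 lead_coefE F4.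
  by rewrite -!mulr_suml -natr_sum.
have nz : \sum_i (T i)`_N != 0.
  apply/eqP => Z; move: LS; rewrite Z mul0r => /esym/eqP; apply/negP; exact: nzK.
have [sz lc] := size_sum_same (fun i => eq_leq (F4 i)) nz.
have J0 : (0 < size J)%N by case: tJ => ne _ _ _ _; rewrite lt0n size_eq0.
exists (\sum_i T i), K; split => //.
- by rewrite lc.
- by rewrite sz /N; move: J0; rewrite /o; case: (~~ odd d) => /=; lia.
- by move=> z; rewrite sz /= !horner_sum mulr_sumr; apply: eq_bigr => i _; apply: F6.
move=> lam rho ln rl /=.
rewrite horner_sum !mulr_sumr; apply: eq_bigr => i _; rewrite -(F7 i lam rho ln rl).
rewrite [RHS](bigD1 i) //= /G eqxx; congr (_ * _); apply: eq_bigr => k /negbTE -> //.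
Qed.


Lemma main_inv J bc D :
  charfun ep Cp C1p Sp S1p (fun _ => 0) J bc D -> Pinv J bc D.
Proof.
elim => [j bc' ne|J' bc' u parts DD DN _ tJ sp _ IHD _ IHN].
  exact: base_inv.
have := split_inv tJ sp IHD IHN. exact.
Qed.

End Main.

Lemma eval2_C (R : realType) (Q : {poly R[i]}) x y : eval2 Q%:P x y = Q.[y].
Proof.
rewrite /eval2 /map_poly horner_poly size_polyC.
case: eqP => [->|_]; first by rewrite big_ord0 horner0.
by rewrite big_ord1 /= coefC /= expr0 mulr1.
Qed.

Lemma eval2_XC (R : realType) (Q : {poly R[i]}) x y : Q != 0 ->
  eval2 (Q%:P * 'X) x y = x * Q.[y].
Proof.
move=> Qn; rewrite /eval2 /map_poly horner_poly size_mulX ?polyC_eq0 // size_polyC Qn.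
rewrite !big_ord_recl big_ord0 /= !coefMX /= coefC /= horner0 mul0r add0r.
by rewrite expr1 addr0 mulrC.
Qed.

Lemma tdeg_C (R : realType) (Q : {poly R[i]}) : Q != 0 -> tdeg Q%:P = (size Q).-1.
Proof.
move=> Qn; rewrite /tdeg size_polyC Qn big_mkcond big_ord1 /= coefC /= Qn.
by rewrite add0n.
Qed.

Lemma tdeg_XC (R : realType) (Q : {poly R[i]}) : Q != 0 ->
  tdeg (Q%:P * 'X) = (size Q).-1.+1.
Proof.
move=> Qn; rewrite /tdeg size_mulX ?polyC_eq0 // size_polyC Qn big_mkcond.
rewrite !big_ord_recl big_ord0 /= !coefMX /= coefC /= Qn eqxx /=.
by rewrite maxn0 max0n add1n.
Qed.

End Aux.
Import Aux.


Theorem lemma1 (R : realType) (m : nat) (ep : nat -> nat * nat)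
  (bc : nat -> bool) (C0 S0 : R -> R[i] -> R[i]) (Delta0 : R[i] -> R[i]) :
  (0 < m)%N ->
  is_tree ep (iota 0 m) ->
  (* C0(x,lam), S0(x,lam): solutions of -y'' = lam y (zero potential) with
     C0(0)=1, C0'(0)=0, S0(0)=0, S0'(0)=1 *)
  (forall lam : R[i],
     [/\ solves_zero_pot lam (fun x => C0 x lam), C0 0 lam = 1 &
         cderiv (fun x => C0 x lam) 0 = 0] /\
     [/\ solves_zero_pot lam (fun x => S0 x lam), S0 0 lam = 0 &
         cderiv (fun x => S0 x lam) 0 = 1]) ->
  (* Delta0 is the characteristic function of L_0 (all sigma_j = 0, gamma_j = 0) *)
  charfun ep
    (fun _ lam => C0 pi lam) (fun _ lam => cderiv (fun x => C0 x lam) pi)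
    (fun _ lam => S0 pi lam) (fun _ lam => cderiv (fun x => S0 x lam) pi)
    (fun _ => 0) (iota 0 m) bc Delta0 ->
  let d := count bc (boundary ep (iota 0 m)) in
  exists Rm : {poly {poly R[i]}},
    [/\ Rm != 0, tdeg Rm = m,
        (forall lam rho : R[i], lam != 0 -> rho ^+ 2 = lam -> 0 <= complex.Re rho ->
           Delta0 lam = rho ^ (1 - (d%:Z)) * eval2 Rm (csin (rho * cpi)) (ccos (rho * cpi)))
      & (exists Q : {poly R[i]},
          if odd d then
            [/\ size Q = m.+1,
                (forall z, Q.[z] = (-1) ^+ m * Q.[- z]) &
                (forall rho : R[i], 0 <= complex.Re rho ->
                   eval2 Rm (csin (rho * cpi)) (ccos (rho * cpi)) = Q.[ccos (rho * cpi)])]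
          else
            [/\ size Q = m,
                (forall z, Q.[z] = (-1) ^+ (m.-1) * Q.[- z]) &
                (forall rho : R[i], 0 <= complex.Re rho ->
                   eval2 Rm (csin (rho * cpi)) (ccos (rho * cpi))
                   = csin (rho * cpi) * Q.[ccos (rho * cpi)])])].
Proof.
move=> m0 tJ H Hc d.
have [Q [k [k0 lc sz par val]]] := main_inv H Hc.
rewrite /dc size_iota -/d in lc sz par val.
have Qn : Q != 0.
  by rewrite -size_poly_gt0 sz; move: m0; case: (~~ odd d) => /=; rewrite ?subn0 ?subn1 //.
case Od : (odd d) in sz val *.
- exists Q%:P; split.
  + by rewrite polyC_eq0.
  + by rewrite tdeg_C // sz subn0.
  + by move=> lam rho ln rl _; rewrite (val lam rho ln rl) eval2_C /= expr0 mul1r.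
  + exists Q; split.
    * by rewrite sz subn0.
    * by move=> z; rewrite par sz subn0.
    * by move=> rho _; rewrite eval2_C.
- exists (Q%:P * 'X); split.
  + by rewrite mulf_neq0 ?polyC_eq0 ?polyX_eq0.
  + by rewrite tdeg_XC // sz subn1 /= prednK.
  + by move=> lam rho ln rl _; rewrite (val lam rho ln rl) eval2_XC //= expr1.
  + exists Q; split.
    * by rewrite sz subn1.
    * by move=> z; rewrite par sz subn1.
    * by move=> rho _; rewrite eval2_XC.
Qed.
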